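(* Let $\mathcal G$ be a connected rank-3 tensor Feynman graph as in the context, with $N_{\rm ext}$ external legs. Let \[ \omega_{\deg}(\mathcal G)=-(V-1)+\tfrac12F_{\rm int}(\mathcal G). \] Then: \begin{itemize} \item if $N_{\rm ext}\ge6$, then $\omega_{\deg}(\mathcal G)\le-N_{\rm ext}/12$; \item if $N_{\rm ext}=4$, then $\omega_{\deg}(\mathcal G)\le0$; \item if $N_{\rm ext}=2$, then $\omega_{\deg}(\mathcal G)\le1$. \end{itemize}
   Context: Bubbles. Use colors $1,2,3$ for bubble edges and color $0$ for propagator lines. The tetrahedral bubble $\mathbf b_+$ is $K_4$ on $w_1,\dots,w_4$ with the following colored edges: \begin{itemize} \item $w_1w_2$ and $w_3w_4$ of color 1; \item $w_1w_3$ and $w_2w_4$ of color 2; \item $w_1w_4$ and $w_2w_3$ of color 3. \end{itemize} For $c\in\{1,2,3\}$, the melonic bubble $\mathbf b_c$ has vertices $w_1,\dots,w_4$ and the following edges: \begin{itemize} \item $w_1w_2$ doubled, carrying the two colors of $\{1,2,3\}\setminus\{c\}$; \item $w_3w_4$ doubled, carrying the two colors of $\{1,2,3\}\setminus\{c\}$; \item single edges $w_2w_3$ and $w_4w_1$ of color $c$. \end{itemize} Graphs. A graph $\mathcal G$ consists of the following data: \begin{itemize} \item $V=V_++V_m$ interaction vertices (copies of $\mathbf b_+$, resp. of some $\mathbf b_c$); \item $L$ internal color-0 lines joining bubble vertices, each bubble vertex incident to at most one line; \item a color-0 external leg at each bubble vertex not incident to a line. \end{itemize} Let $N_{\rm ext}$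 be the number of external legs. The colored extension $\mathcal G_{\rm col}$ is the resulting 4-edge-colored graph. Connected means $\mathcal G_{\rm col}$ is connected. Faces. A face of color $c\in\{1,2,3\}$ is a connected component of the subgraph of $\mathcal G_{\rm col}$ formed by the color-0 edges and half-edges and the color-$c$ edges. It is internal if it is a cycle, and external if it is a path between two external legs. $F_{\rm int}(\mathcal G)$ is the number of internal faces. *)

(* Defs.v *)
From mathcomp Require Import all_boot all_order all_algebra.
Set Implicit Arguments. Unset Strict Implicit. Unset Printing Implicit Defensive.
Import GRing.Theory Num.Theory.

(* Bubble colors 1,2,3 (color 0 is reserved for propagator lines). *)
Inductive color := C1 | C2 | C3.

(* Kind of interaction vertex: tetrahedral b_+ or melonic b_c. *)
Inductive bkind := Tetra | Melo of color.

Definition color_idx (c : color) : nat :=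
  match c with C1 => 1 | C2 => 2 | C3 => 3 end.

(* Bubble vertices w1..w4 are encoded as 0..3 in 'I_4.
   Partner of vertex i along the perfect matching "xor k":
     k = 1 : {w1w2, w3w4};   k = 2 : {w1w3, w2w4};   k = 3 : {w1w4, w2w3}. *)
Definition flip (k : nat) (i : 'I_4) : 'I_4 := inord (Nat.lxor i k).

(* The matching formed by the color-c edges of a bubble of kind b.
   b_+ : color 1 on w1w2,w3w4 ; color 2 on w1w3,w2w4 ; color 3 on w1w4,w2w3.
   b_d : color d on w2w3, w4w1 (matching 3); the two colors /= d on the
         doubled edges w1w2, w3w4 (matching 1). *)
Definition pairing (b : bkind) (c : color) : nat :=
  match b with
  | Tetra => color_idx c
  | Melo d => if color_idx c == color_idx d then 3 else 1
  end.

Section Graph.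
Variable V : nat.
Variable kind : 'I_V -> bkind.
Definition bvert := ('I_V * 'I_4)%type.
(* Propagator lines are encoded by an involution [line] on bubble vertices:
   line x = y <> x means a color-0 line joins x and y;
   line x = x means x carries an external leg. *)
Variable line : bvert -> bvert.

Definition cedge (c : color) (x : bvert) : bvert :=
  (x.1, flip (pairing (kind x.1) c) x.2).

Definition is_ext (x : bvert) : bool := line x == x.

Definition N_ext : nat := #|[set x : bvert | is_ext x]|.

Definition col_adj : rel bvert := fun x y =>
  [|| (line x == y) && (x != y), cedge C1 x == y, cedge C2 x == y
    | cedge C3 x == y].

Definition connected_graph : Prop := forall x y : bvert, connect col_adj x y.

Definition face_adj (c : color) : rel bvert := fun x y =>
  ((line x == y) && (x != y)) || (cedge c x == y).

Definition face (c : color) (x : bvert) : {set bvert} :=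
  [set y | connect (face_adj c) x y].

(* a face is internal iff it contains no external leg (then it is a cycle) *)
Definition internal_face (c : color) (x : bvert) : bool :=
  [forall y, (y \in face c x) ==> ~~ is_ext y].

Definition F_int_c (c : color) : nat :=
  #|[set face c x | x in [set x : bvert | internal_face c x]]|.

Definition F_int : nat := F_int_c C1 + F_int_c C2 + F_int_c C3.

Local Open Scope ring_scope.
Definition omega_deg : rat := - ((V%:R : rat) - 1) + (F_int%:R) / 2.
End Graph.

(* Main.v *)
Require Import Defs.
From mathcomp Require Import all_boot all_order all_algebra zify lra.
Set Implicit Arguments. Unset Strict Implicit. Unset Printing Implicit Defensive.

Lemma connect_restr (T : finType) (e1 e2 : rel T) (P : pred T) :
  (forall u v, P u -> e1 u v -> P v /\ e2 u v) ->
  forall x y, P x -> connect e1 x y -> connect e2 x y /\ P y.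
Proof.
move=> H x y Px /connectP [p pth ->].
elim: p x Px pth => [|z p IH] x Px /=; first by split => //; exact: connect0.
move/andP=> [exz pth]; have [Pz e2xz] := H _ _ Px exz.
have [c Pl] := IH z Pz pth; split=> //.
exact: connect_trans (connect1 e2xz) c.
Qed.

Lemma flipK k (i : 'I_4) : k \in [:: 1; 2; 3]%N -> flip k (flip k i) = i.
Proof.
case: i => [[|[|[|[|i]]]] Hi] //; rewrite !inE => /or3P [] /eqP -> ;
  by apply/val_inj; rewrite /flip /= !inordK.
Qed.

Lemma flip_neq k (i : 'I_4) : k \in [:: 1; 2; 3]%N -> flip k i != i.
Proof.
case: i => [[|[|[|[|i]]]] Hi] //; rewrite !inE => /or3P [] /eqP -> ;
  by rewrite -val_eqE /flip /= !inordK.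
Qed.

Lemma pairing_in b c : pairing b c \in [:: 1; 2; 3]%N.
Proof. by case: b => [|d]; case: c => //; case: d. Qed.

Section G.
Variable V : nat.
Variable kind : 'I_V -> bkind.

Lemma cedgeK c : involutive (cedge kind c).
Proof. by case=> b i; rewrite /cedge /= flipK // pairing_in. Qed.

Lemma cedge_neq c x : cedge kind c x != x.
Proof.
case: x => b i; rewrite /cedge xpair_eqE negb_and eqxx /=.
by rewrite flip_neq // pairing_in.
Qed.

Lemma cedge1 c x : (cedge kind c x).1 = x.1.
Proof. by []. Qed.
End G.

Set Implicit Arguments. Unset Strict Implicit. Unset Printing Implicit Defensive.

Section F.
Variable V : nat.
Variable kind : 'I_V -> bkind.
Variable line : bvert V -> bvert V.
Hypothesis linv : involutive line.

Lemma face_adj_sym c : symmetric (face_adj kind line c).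
Proof.
move=> x y; rewrite /face_adj.
apply/idP/idP => /orP [/andP [/eqP <- nx] | /eqP <-].
- by rewrite linv eqxx eq_sym nx.
- by rewrite cedgeK eqxx orbT.
- by rewrite linv eqxx eq_sym nx.
- by rewrite cedgeK eqxx orbT.
Qed.

Lemma col_adj_sym : symmetric (col_adj kind line).
Proof.
move=> x y; rewrite /col_adj.
apply/idP/idP => /or4P [/andP [/eqP <- nx] | /eqP <- | /eqP <- | /eqP <-];
  rewrite ?linv ?cedgeK ?eqxx ?orbT //=; by apply/orP; left; rewrite eq_sym.
Qed.

Lemma face_adj_col c x y : face_adj kind line c x y -> col_adj kind line x y.
Proof.
rewrite /face_adj /col_adj => /orP [-> // | H]; case: c H => ->; by rewrite !orbT.
Qed.

Lemma face_col c x y : y \in face kind line c x -> connect (col_adj kind line) x y.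
Proof. rewrite inE; apply: connect_sub => u v H; by apply: connect1; apply: face_adj_col H. Qed.

Lemma face_refl c x : x \in face kind line c x.
Proof. by rewrite inE connect0. Qed.

Lemma face_eq c x y : y \in face kind line c x -> face kind line c y = face kind line c x.
Proof.
rewrite inE => cxy; apply/setP => z; rewrite !inE.
apply/idP/idP => H; first exact: connect_trans cxy H.
rewrite (sym_connect_sym (face_adj_sym c)) in cxy.
exact: connect_trans cxy H.
Qed.

Lemma face_line c x : line x \in face kind line c x.
Proof.
case E: (line x == x); first by rewrite (eqP E) face_refl.
by rewrite inE connect1 // /face_adj eqxx eq_sym E.
Qed.

Lemma face_cedge c x : cedge kind c x \in face kind line c x.
Proof. by rewrite inE connect1 // /face_adj eqxx orbT. Qed.

Lemma internal_not_ext c x : internal_face kind line c x -> ~~ is_ext line x.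
Proof. by move/forallP/(_ x); rewrite face_refl. Qed.

Lemma internal_mem c x y : internal_face kind line c x -> y \in face kind line c x ->
  internal_face kind line c y.
Proof. by move=> H /face_eq E; rewrite /internal_face E. Qed.
End F.

Set Implicit Arguments. Unset Strict Implicit. Unset Printing Implicit Defensive.

Definition del {V : nat} (line : bvert V -> bvert V) (x : bvert V) (z : bvert V) :=
  if (z == x) || (z == line x) then z else line z.

Section D.
Variable V : nat.
Variable kind : 'I_V -> bkind.
Variable line : bvert V -> bvert V.
Hypothesis linv : involutive line.
Variable x : bvert V.
Hypothesis hx : line x != x.

Local Notation dl := (del line x).

Lemma del_invol : involutive dl.
Proof.
move=> z; rewrite /del.
case E: ((z == x) || (z == line x)); first by rewrite E.
have -> : (line z == x) || (line z == line x) = false.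
  apply/negbTE; move/negbT: E; apply: contra => /orP [/eqP <- | /eqP H].
  - by rewrite linv eqxx orbT.
  - by rewrite -(linv z) H linv eqxx.
by rewrite linv.
Qed.

Lemma del_other z : z != x -> z != line x -> dl z = line z.
Proof. by move=> h1 h2; rewrite /del (negbTE h1) (negbTE h2). Qed.

Lemma del_adj c u v : face_adj kind dl c u v -> face_adj kind line c u v.
Proof.
rewrite /face_adj /del; case: ifP => _ //.
by move=> /orP [/andP [/eqP ->]|->]; rewrite ?eqxx ?orbT.
Qed.

Lemma del_face_sub c z : face kind dl c z \subset face kind line c z.
Proof.
apply/subsetP => u; rewrite !inE; apply: connect_sub => a b H.
by apply: connect1; apply: del_adj.
Qed.

Lemma ext_del u : is_ext dl u = [|| is_ext line u, u == x | u == line x].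
Proof.
rewrite /is_ext /del; case: ifP => [/orP [] /eqP -> | /norP [h1 h2]];
  by rewrite ?eqxx ?orbT ?orbF.
Qed.

Lemma N_ext_del : N_ext dl = (N_ext line).+2.
Proof.
have E : [set u | is_ext dl u] = x |: (line x |: [set u | is_ext line u]).
  by apply/setP => u; rewrite !inE ext_del orbC -orbA.
rewrite /N_ext E !cardsU1 !inE /is_ext linv.
by rewrite (eq_sym x) (negbTE hx).
Qed.
Lemma line_notin c z : x \notin face kind line c z -> line x \notin face kind line c z.
Proof.
apply: contra => H; rewrite -(face_eq linv H).
by have := face_line kind line c (line x); rewrite linv.
Qed.

Lemma face_same c z : x \notin face kind line c z ->
  face kind dl c z = face kind line c z.
Proof.
move=> nx; have nlx := line_notin nx.
apply/eqP; rewrite eqEsubset del_face_sub /=; apply/subsetP => u.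
rewrite [u \in face _ _ _ z]inE => czu; rewrite inE.
have HH : forall a b, a \in face kind line c z -> face_adj kind line c a b ->
    b \in face kind line c z /\ face_adj kind dl c a b.
  move=> a b Ha ab; split.
    rewrite /face !inE in Ha *; exact: connect_trans Ha (connect1 ab).
  have h1 : a != x by apply: contraNneq nx => <-.
  have h2 : a != line x by apply: contraNneq nlx => <-.
  by rewrite /face_adj del_other.
by case: (@connect_restr _ _ _ (fun a => a \in face kind line c z) HH z u (face_refl _ _ _ _) czu).
Qed.

Lemma internal_same c z : internal_face kind line c z -> x \notin face kind line c z ->
  internal_face kind dl c z.
Proof.
move=> H nx; have nlx := line_notin nx.
apply/forallP => u; apply/implyP; rewrite face_same // => uf.
rewrite ext_del negb_or (implyP (forallP H u) uf) /= negb_or.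
by apply/andP; split; [apply: contraNneq nx => <- | apply: contraNneq nlx => <-].
Qed.

Lemma F_int_c_del c : (F_int_c kind line c <= F_int_c kind dl c + internal_face kind line c x)%N.
Proof.
rewrite /F_int_c.
set A := [set face kind line c z | z in _].
set A' := [set face kind dl c z | z in _].
rewrite (cardsD1 (face kind line c x) A) addnC leq_add //.
  apply: subset_leq_card; apply/subsetP => f; rewrite !inE => /andP [nf /imsetP [z]].
  rewrite inE => iz ?; subst f.
  have nx : x \notin face kind line c z.
    by apply: contra nf => xz; apply/eqP; rewrite (face_eq linv xz).
  apply/imsetP; exists z; last by rewrite face_same.
  rewrite inE; exact: internal_same.
case: (boolP (face kind line c x \in A)) => // /imsetP [z]; rewrite inE => iz E.
have -> : internal_face kind line c x by rewrite /internal_face E.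
by [].
Qed.
End D.

Set Implicit Arguments. Unset Strict Implicit. Unset Printing Implicit Defensive.

Lemma inv_parity (T : finType) (f : T -> T) (finv : involutive f) (S : {set T}) :
  (forall u, u \in S -> f u \in S) -> odd #|S| = odd #|[set u in S | f u == u]|.
Proof.
move: {2}#|S| (leqnn #|S|) => n; elim: n S => [|n IH] S leS cl.
  move: leS; rewrite leqn0 cards_eq0 => /eqP ->.
  by rewrite cards0 (_ : [set u in set0 | _] = set0) ?cards0 //; apply/setP => u; rewrite !inE.
case: (pickP [pred u | (u \in S) && (f u != u)]) => [u /andP [uS fu] | none].
  set S' := S :\ u :\ f u.
  have fuS : f u \in S by apply: cl.
  have cS : #|S| = (#|S'|).+2.
    rewrite (cardsD1 u S) uS (cardsD1 (f u) (S :\ u)) !inE fu fuS.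
    by [].
  have eF : [set v in S | f v == v] = [set v in S' | f v == v].
    apply/setP => v; rewrite !inE.
    case: (v =P f u) => [-> | _]; first by rewrite finv eq_sym (negbTE fu) !andbF.
    case: (v =P u) => [-> | _]; first by rewrite (negbTE fu) !andbF.
    by [].
  have cl' : forall v, v \in S' -> f v \in S'.
    move=> v; rewrite !inE => /and3P [h1 h2 h3].
    rewrite (inj_eq (can_inj finv)) h2 cl // andbT /=.
    by apply: contra h1 => /eqP <-; rewrite finv.
  rewrite cS /= eF -(IH S') //; first by rewrite negbK.
  by move: leS; rewrite cS ltnS => /ltnW.
have -> : [set u in S | f u == u] = S.
  apply/setP => v; rewrite inE; case vS: (v \in S) => //=.
  by have := none v; rewrite /= vS /= => /negbFE.
by [].
Qed.

Section E.
Variable V : nat.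
Variable kind : 'I_V -> bkind.
Variable line : bvert V -> bvert V.
Hypothesis linv : involutive line.

Lemma other_ext c x : is_ext line x ->
  exists y, [/\ y != x, y \in face kind line c x & is_ext line y].
Proof.
move=> ex.
set S := face kind line c x.
have clS : forall f, (forall u, face_adj kind line c u (f u) \/ f u = u) ->
    forall u, u \in S -> f u \in S.
  move=> f H u uS; case: (H u) => [a | ->] //.
  by rewrite /S -(face_eq linv uS) inE connect1.
have H1 : forall u, face_adj kind line c u (cedge kind c u) \/ cedge kind c u = u.
  by move=> u; left; rewrite /face_adj eqxx orbT.
have H2 : forall u, face_adj kind line c u (line u) \/ line u = u.
  move=> u; case E: (line u == u); first by right; apply/eqP.
  by left; rewrite /face_adj eqxx eq_sym E.
have p1 := inv_parity (cedgeK kind c) (clS _ H1).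
have p2 := inv_parity linv (clS _ H2).
have e1 : [set u in S | cedge kind c u == u] = set0.
  by apply/setP => u; rewrite !inE (negbTE (cedge_neq _ _ _)) andbF.
rewrite e1 cards0 in p1.
rewrite p1 in p2.
set F := [set u in S | line u == u] in p2.
have xF : x \in F by rewrite inE face_refl.
move: p2; rewrite (cardsD1 x F) xF /= => /esym/negbT; rewrite negbK => o.
have : 0 < #|F :\ x| by case: #|_| o.
rewrite card_gt0 => /set0Pn [y]; rewrite !inE => /and3P [yx yS ye].
by exists y; split => //; rewrite inE.
Qed.
End E.

Lemma conn_del V (kind : 'I_V -> bkind) (line : bvert V -> bvert V) (linv : involutive line)
  x (hx : line x != x) c (hi : internal_face kind line c x) :
  connected_graph kind line -> connected_graph kind (del line x).
Proof.
have dinv := del_invol linv x.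
have key : connect (col_adj kind (del line x)) x (line x).
  have ex : is_ext (del line x) x by rewrite ext_del eqxx orbT.
  have [y [yx yf ye]] := other_ext kind dinv c ex.
  have yf' : y \in face kind line c x := subsetP (del_face_sub kind line x c x) y yf.
  rewrite ext_del (negbTE yx) /= in ye.
  have ne : ~~ is_ext line y by have := forallP hi y; rewrite yf'.
  rewrite (negbTE ne) /= in ye; rewrite -(eqP ye).
  exact: face_col yf.
have csym := sym_connect_sym (col_adj_sym kind dinv).
move=> conn u v; apply: (connect_sub _ (conn u v)) => a b.
rewrite /col_adj; case/or4P => [/andP [/eqP lab nab] | H | H | H];
  try by apply: connect1; rewrite /col_adj H ?orbT.
case: (a =P x) => [ax | /eqP nax].
  by rewrite -lab ax.
case: (a =P line x) => [alx | /eqP nalx].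
  by rewrite -lab alx linv csym.
by apply: connect1; rewrite /col_adj del_other // lab eqxx nab.
Qed.

Set Implicit Arguments. Unset Strict Implicit. Unset Printing Implicit Defensive.

Section P.
Variable V : nat.
Variable kind : 'I_V -> bkind.
Variable line : bvert V -> bvert V.
Hypothesis linv : involutive line.
Hypothesis conn : connected_graph kind line.

Definition allint x := [&& internal_face kind line C1 x, internal_face kind line C2 x
  & internal_face kind line C3 x].
Definition someint x := [|| internal_face kind line C1 x, internal_face kind line C2 x
  | internal_face kind line C3 x].

Lemma propagate w z : is_ext line w -> someint z ->
  exists x, someint x && ~~ allint x.
Proof.
move=> ew sz.
case: (pickP [pred x | someint x && ~~ allint x]) => [x H | none]; first by exists x.
have hyp : forall x, someint x -> allint x.
  by move=> x sx; have := none x; rewrite /= sx /= => /negbFE.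
have cl : forall a b, allint a -> col_adj kind line a b -> allint b /\ col_adj kind line a b.
  move=> a b ga ab; split => //.
  move: ab; rewrite /col_adj; case/or4P => [/andP [/eqP lab _] | H | H | H].
  - have bf : forall c, b \in face kind line c a by move=> c; rewrite -lab face_line.
    case/and3P: ga => g1 g2 g3.
    by rewrite /allint !(internal_mem linv g1 (bf _)) (internal_mem linv g2 (bf _)) (internal_mem linv g3 (bf _)).
  - apply: hyp; rewrite /someint; case/and3P: ga => g1 _ _.
    by rewrite (internal_mem linv g1 (_ : b \in _)) // -(eqP H) face_cedge.
  - apply: hyp; rewrite /someint; case/and3P: ga => _ g2 _.
    by rewrite (internal_mem linv g2 (_ : b \in _)) ?orbT // -(eqP H) face_cedge.
  - apply: hyp; rewrite /someint; case/and3P: ga => _ _ g3.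
    by rewrite (internal_mem linv g3 (_ : b \in _)) ?orbT // -(eqP H) face_cedge.
have [_ gw] := @connect_restr _ _ _ allint cl z w (hyp z sz) (conn z w).
case/and3P: gw => g1 _ _.
by move: (internal_not_ext g1); rewrite ew.
Qed.
End P.

Section T.
Variable V : nat.
Variable kind : 'I_V -> bkind.
Variable line : bvert V -> bvert V.
Hypothesis linv : involutive line.
Hypothesis conn : connected_graph kind line.

Lemma grow n : n < V -> exists S : {set 'I_V}, #|S| = n.+1 /\
  exists E : {set bvert V}, #|E| = (2 * n)%N /\
   forall u, u \in E -> [/\ ~~ is_ext line u, u.1 \in S & (line u).1 \in S].
Proof.
elim: n => [H | n IH H].
  exists [set Ordinal H]; split; first by rewrite cards1.
  by exists set0; split; [rewrite cards0 | move=> u; rewrite inE].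
have [S [cS [E [cE hE]]]] := IH (ltnW H).
have [b nb] : exists b, b \notin S.
  apply/existsP; rewrite -negb_forall; apply/negP => /forallP all.
  have : #|S| = #|'I_V| by apply/eqP; rewrite eqn_leq max_card /= subset_leq_card //; apply/subsetP => i _; apply: all.
  by rewrite card_ord cS => E1; rewrite E1 ltnn in H.
have [a aS] : exists a, a \in S.
  by apply/set0Pn; rewrite -card_gt0 cS.
case: (pickP [pred u : bvert V | [&& u.1 \in S, ~~ is_ext line u & (line u).1 \notin S]])
   => [u /and3P [uS ue lu] | none].
  exists ((line u).1 |: S); split; first by rewrite cardsU1 lu cS.
  exists (u |: (line u |: E)); split.
    have uE : u \notin E by apply/negP => /hE [_ _]; rewrite (negbTE lu).
    have luE : line u \notin E by apply/negP => /hE [_]; rewrite (negbTE lu).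
    have ulu : u != line u by rewrite eq_sym.
    by rewrite cardsU1 cardsU1 !inE negb_or ulu uE luE cE mulnS.
  move=> v; rewrite !inE => /or3P [/eqP -> | /eqP -> | vE].
  - by rewrite ue uS eqxx orbT.
  - rewrite linv uS orbT eqxx; split => //.
    by rewrite /is_ext linv eq_sym.
  - by case: (hE v vE) => h1 h2 h3; rewrite h1 h2 h3 !orbT.
have cl : forall p q, p.1 \in S -> col_adj kind line p q -> q.1 \in S /\ col_adj kind line p q.
  move=> p q pS pq; split => //; move: pq; rewrite /col_adj.
  case/or4P => [/andP [/eqP lpq npq] | /eqP <- | /eqP <- | /eqP <-] //.
  have := none p; rewrite /= pS /= lpq.
  have -> : ~~ is_ext line p by rewrite /is_ext lpq eq_sym.
  by case: (q.1 \in S).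
have [_] := @connect_restr _ _ _ (fun p : bvert V => p.1 \in S) cl (a, ord0) (b, ord0) aS (conn _ _).
by rewrite /= (negbTE nb).
Qed.

Lemma tree_bound : (2 * V.-1 <= #|[set u | ~~ is_ext line u]|)%N.
Proof.
case: (posnP V) => [V0 | Vp]; first by rewrite {1}V0.
have VV : V.-1 < V by rewrite ltn_predL.
have [S [_ [E [cE hE]]]] := grow VV.
rewrite -cE; apply: subset_leq_card; apply/subsetP => u /hE [h _ _].
by rewrite inE.
Qed.
End T.

Set Implicit Arguments. Unset Strict Implicit. Unset Printing Implicit Defensive.

Lemma card_split V (line : bvert V -> bvert V) :
  (N_ext line + #|[set u | ~~ is_ext line u]| = 4 * V)%N.
Proof.
have -> : [set u | ~~ is_ext line u] = ~: [set u | is_ext line u].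
  by apply/setP => u; rewrite !inE.
by rewrite /N_ext cardsC card_prod !card_ord mulnC.
Qed.

Lemma F0_case V (kind : 'I_V -> bkind) (line : bvert V -> bvert V) :
  involutive line -> connected_graph kind line -> (0 < N_ext line)%N ->
  F_int kind line = 0%N -> (F_int kind line + N_ext line <= 2 * V + 2)%N.
Proof.
move=> linv conn hN F0; rewrite F0 add0n.
have := tree_bound linv conn; rewrite -subn1; have := card_split line. set I := #|_|. move: hN. set N := N_ext line. move=> *. lia.
Qed.

Lemma Fpos V (kind : 'I_V -> bkind) (line : bvert V -> bvert V) :
  (0 < F_int kind line)%N -> exists c z, internal_face kind line c z.
Proof.
move=> Fp.
have H : forall c, (0 < F_int_c kind line c)%N -> exists z, internal_face kind line c z.
  move=> c; rewrite card_gt0 => /set0Pn [f /imsetP [z]]; rewrite inE => iz _.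
  by exists z.
move: Fp; rewrite /F_int.
case: (posnP (F_int_c kind line C1)) => [h1 | /H [z ?]]; last by exists C1, z.
case: (posnP (F_int_c kind line C2)) => [h2 | /H [z ?]]; last by exists C2, z.
case: (posnP (F_int_c kind line C3)) => [h3 | /H [z ?]]; last by exists C3, z.
by rewrite h1 h2 h3.
Qed.

Lemma main_bound V (kind : 'I_V -> bkind) : forall k (line : bvert V -> bvert V),
  (#|[set u | ~~ is_ext line u]| <= k)%N -> involutive line -> connected_graph kind line ->
  (0 < N_ext line)%N -> (F_int kind line + N_ext line <= 2 * V + 2)%N.
Proof.
elim => [|k IH] line hk linv conn hN.
all: case: (posnP (F_int kind line)) => [F0 | Fp]; first by apply: F0_case.
all: have [c [z iz]] := Fpos Fp.
  have : (0 < #|[set u | ~~ is_ext line u]|)%N.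
    by apply/card_gt0P; exists z; rewrite inE (internal_not_ext iz).
  by rewrite leqn0 in hk; rewrite (eqP hk).
have [w ew] : exists w, is_ext line w.
  by move: hN; rewrite card_gt0 => /set0Pn [w]; rewrite inE; exists w.
have sz : someint kind line z by rewrite /someint; case: c iz => ->; rewrite ?orbT.
have [x /andP [sx nax]] := propagate linv conn ew sz.
have [c1 ic1] : exists c1, internal_face kind line c1 x.
  move: sx; rewrite /someint => /or3P [] ?; [exists C1 | exists C2 | exists C3]; done.
have hx : line x != x by have := internal_not_ext ic1.
have dinv := del_invol linv x.
have conn' := conn_del linv hx ic1 conn.
have N' := N_ext_del linv hx.
have cs := card_split line.
have cs' := card_split (del line x).
have hk' : (#|[set u | ~~ is_ext (del line x) u]| <= k)%N by lia.
have := IH _ hk' dinv conn'; rewrite N' => /(_ isT) IH'.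
have d1 := F_int_c_del kind linv x C1.
have d2 := F_int_c_del kind linv x C2.
have d3 := F_int_c_del kind linv x C3.
have hs : (internal_face kind line C1 x + internal_face kind line C2 x
           + internal_face kind line C3 x <= 2)%N.
  move: nax; rewrite /allint.
  by case: (internal_face kind line C1 x); case: (internal_face kind line C2 x);
     case: (internal_face kind line C3 x).
move: IH'; rewrite /F_int; lia.
Qed.

Import GRing.Theory Num.Theory.
Local Open Scope ring_scope.
Theorem theorem2 (V : nat) (kind : 'I_V -> bkind) (line : bvert V -> bvert V)
  (line_invol : involutive line)
  (conn : connected_graph kind line) :
  let N := N_ext line in
  let w := omega_deg kind line in
  [/\ (6 <= N)%N -> w <= - (N%:R) / 12,
      N = 4%N -> w <= 0
    & N = 2%N -> w <= 1].
Proof.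
move=> N w.
have R : (0 < N)%N -> ((F_int kind line)%:R + N%:R <= 2 * V%:R + 2 :> rat).
  move=> h; have := main_bound (kind := kind) (leqnn _) line_invol conn h.
  rewrite -(ler_nat rat) !natrD => ?; lra.
have wE : w = - ((V%:R : rat) - 1) + (F_int kind line)%:R / 2 by [].
split.
- move=> h6; have hN : (0 < N)%N by case: (N) h6.
  have := R hN; rewrite wE.
  have : (6%:R <= N%:R :> rat) by rewrite ler_nat.
  move=> *; lra.
- move=> h4; have hN : (0 < N)%N by rewrite h4.
  have := R hN; rewrite wE h4 => *; lra.
- move=> h2; have hN : (0 < N)%N by rewrite h2.
  have := R hN; rewrite wE h2 => *; lra.
Qed.
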